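(* Let $I$ be a resident-minimal and hospital-complete instance and $J$ a simple extension of $I$. Let $P=\mathrm{prop}(J)\setminus\mathrm{prop}(I)$ and $X=\mathrm{rej}(J)\setminus\mathrm{rej}(I)$. Then: (P1) $P\cap\mathrm{prop}(I)=\emptyset$; (P2) for each $r\in R$ there is at most one $h\in H$ with $(r,h)\in P$; (P3) $X\subseteq\mathrm{tent}(I)$; (P4) $\mathrm{res}\,P\cap\mathrm{res}\,\mathrm{tent}(I)\subseteq\mathrm{res}\,X$; (P5) for each $h\in H$, $|\mathrm{res}_h(P\cup(\mathrm{tent}(I)\setminus X))|\le q_h$, and if $\mathrm{res}_h X$ is non-empty then $|\mathrm{res}_h(P\cup(\mathrm{tent}(I)\setminus X))|=q_h$; (P6) for each $h\in H$, each member of $\mathrm{res}_h(P\cup(\mathrm{tent}(I)\setminus X))$ precedes all members of $\mathrm{res}_h X$ in the preference list of $h$ in $I$.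
   Context: An instance $I$ consists of finite disjoint sets $R$ (residents) and $H$ (hospitals), a positive integer quota $q_h$ for each $h\in H$, for each $r\in R$ a preference list of $r$ (a sequence of distinct members of $H$, not necessarily all), and for each $h\in H$ a preference list of $h$ (a sequence of distinct members of $R$). A list is complete if it contains every member of the opposite side; an instance is hospital-complete if every hospital's list is complete. A match is a pair $(r,h)\in R\times H$. For a set $M$ of matches, $\mathrm{res}_h M=\{r:(r,h)\in M\}$, $\mathrm{res}\,M=\{r:(r,h)\in M\text{ for some }h\}$. $J$ is an extension of $I$ (same $R,H$, quotas) if every list of $J$ has the corresponding list of $I$ as a prefix. An event is $(r,h)^+$ (proposal) or $(r,h)^-$ (rejection). For an event sequence $\sigma$, $\mathrm{prop}(\sigma)$, $\mathrm{rej}(\sigma)$ are the sets of matches proposed/rejected in $\sigma$ and $\mathrm{tent}(\sigma)=\mathrm{prop}(\sigma)\setminus\mathrm{rej}(\sigma)$. A match $(r,h)\in M$ is ousted from $M$ in $I$ if the list of $h$ in $I$ contains at least $q_h$ residents of $\mathrm{res}_h M$ and either $r$ is not on it or $r$ is preceded on it by at least $q_h$ residents of $\mathrm{res}_h M$. $I$-feasible sequences: the empty sequence is $I$-feasible; if $\sigma$ is $I$-feasible then $\sigma+(r,h)^+$ is $I$-feasible if $r\notin\mathrm{res}\,\mathrm{tent}(\sigma)$, $(r,h)\notin\mathrm{prop}(\sigma)$, $h$ is on the list of $r$ in $I$ and $(r,h')\in\mathrm{rej}(\sigma)$ for every $h'$ preceding $h$ on it; and $\sigma+(r,h)^-$ is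 $I$-feasible if $(r,h)$ is ousted from $\mathrm{prop}(\sigma)$ in $I$ and $(r,h)\notin\mathrm{rej}(\sigma)$. All maximal $I$-feasible sequences contain the same events; $\mathrm{prop}(I),\mathrm{rej}(I),\mathrm{tent}(I)$ denote $\mathrm{prop}(\sigma),\mathrm{rej}(\sigma),\mathrm{tent}(\sigma)$ for any maximal $I$-feasible $\sigma$. $I$ is resident-minimal if $\mathrm{prop}(I)$ equals the set of matches $(r,h)$ with $h$ on the list of $r$ in $I$. An extension $J$ of $I$ is simple if $(\mathrm{prop}(J)\setminus\mathrm{prop}(I))\cap(\mathrm{rej}(J)\setminus\mathrm{rej}(I))=\emptyset$. *)

(* Defs.v *)
From mathcomp Require Import all_boot.
Set Implicit Arguments. Unset Strict Implicit. Unset Printing Implicit Defensive.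

Section HR.
Variables (R H : finType).

(* An instance: quotas and preference lists (residents R, hospitals H are the
   finite types R and H, automatically disjoint). *)
Record instance := Instance {
  quota : H -> nat;
  prefR : R -> seq H;
  prefH : H -> seq R }.

Definition wf_instance (I : instance) : Prop :=
  (forall h, 0 < quota I h) /\
  (forall r, uniq (prefR I r)) /\ (forall h, uniq (prefH I h)).

Definition hospital_complete (I : instance) : Prop :=
  forall h r, r \in prefH I h.

Definition extension (I J : instance) : Prop :=
  (forall h, quota J h = quota I h) /\
  (forall r, prefix (prefR I r) (prefR J r)) /\
  (forall h, prefix (prefH I h) (prefH J h)).

Definition res_h (h : H) (M : {set R * H}) : {set R} := [set r | (r, h) \in M].
Definition res (M : {set R * H}) : {set R} := [set r | [exists h, (r, h) \in M]].

Inductive event := Propose of R & H | Reject of R & H.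

Definition prop (s : seq event) : {set R * H} :=
  [set x | has (fun e => if e is Propose r h then (r, h) == x else false) s].
Definition rej (s : seq event) : {set R * H} :=
  [set x | has (fun e => if e is Reject r h then (r, h) == x else false) s].
Definition tent (s : seq event) : {set R * H} := prop s :\: rej s.

Definition cnt_on (h : H) (M : {set R * H}) (L : seq R) : nat :=
  count (fun x => x \in res_h h M) L.

Definition ousted (I : instance) (M : {set R * H}) (r : R) (h : H) : bool :=
  let L := prefH I h in
  [&& (r, h) \in M,
      quota I h <= cnt_on h M L &
      (r \notin L) || (quota I h <= cnt_on h M (take (index r L) L))].

Definition can_propose (I : instance) (s : seq event) (r : R) (h : H) : bool :=
  let L := prefR I r in
  [&& r \notin res (tent s), (r, h) \notin prop s, h \in L &
      all (fun h' => (r, h') \in rej s) (take (index h L) L)].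

Definition can_reject (I : instance) (s : seq event) (r : R) (h : H) : bool :=
  ousted I (prop s) r h && ((r, h) \notin rej s).

Inductive feasible (I : instance) : seq event -> Prop :=
  | feas_nil : feasible I [::]
  | feas_prop s r h : feasible I s -> can_propose I s r h ->
      feasible I (rcons s (Propose r h))
  | feas_rej s r h : feasible I s -> can_reject I s r h ->
      feasible I (rcons s (Reject r h)).

Definition maximal_feasible (I : instance) (s : seq event) : Prop :=
  feasible I s /\ forall e, ~ feasible I (rcons s e).

(* I is resident-minimal, where sI is a maximal I-feasible sequence
   (so prop(I) = prop sI). *)
Definition resident_minimal (I : instance) (sI : seq event) : Prop :=
  forall r h, ((r, h) \in prop sI) = (h \in prefR I r).

Definition simple_ext (I J : instance) (sI sJ : seq event) : Prop :=
  extension I J /\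
  (prop sJ :\: prop sI) :&: (rej sJ :\: rej sI) = set0.

Definition precedes (L : seq R) (x y : R) : bool :=
  (x \in L) && (index x L < index y L).

End HR.

(* Main.v *)
Require Import Defs.
From mathcomp Require Import all_boot.
Set Implicit Arguments. Unset Strict Implicit. Unset Printing Implicit Defensive.

Lemma prop_rcons (R H : finType) (s : seq (event R H)) e x :
  (x \in prop (rcons s e)) =
  (x \in prop s) || (if e is Propose r h then (r, h) == x else false).
Proof. by rewrite /prop !inE -cats1 has_cat /= orbF. Qed.

Lemma rej_rcons (R H : finType) (s : seq (event R H)) e x :
  (x \in rej (rcons s e)) =
  (x \in rej s) || (if e is Reject r h then (r, h) == x else false).
Proof. by rewrite /rej !inE -cats1 has_cat /= orbF. Qed.

Lemma cnt_on_mono (R H : finType) h (M M' : {set R * H}) L :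
  M \subset M' -> cnt_on h M L <= cnt_on h M' L.
Proof.
move=> sub; apply: sub_count => r; rewrite /res_h !inE => /(subsetP sub); done.
Qed.

Lemma ousted_mono (R H : finType) (K : instance R H) (M M' : {set R * H}) r h :
  M \subset M' -> ousted K M r h -> ousted K M' r h.
Proof.
move=> sub /and3P [rM q1 q2]; apply/and3P; split.
- exact: (subsetP sub).
- exact: leq_trans q1 (cnt_on_mono _ _ sub).
- case/orP: q2 => [->//|q2]; apply/orP; right; exact: leq_trans q2 (cnt_on_mono _ _ sub).
Qed.

Lemma feas_inv (R H : finType) (K : instance R H) s : feasible K s ->
  [/\ rej s \subset prop s,
      (forall r h, (r, h) \in prop s -> h \in prefR K r /\
         all (fun h' => (r, h') \in rej s) (take (index h (prefR K r)) (prefR K r))) &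
      (forall r h, (r, h) \in rej s -> ousted K (prop s) r h)].
Proof.
elim=> [|t r h ft [i1 i2 i3] cp|t r h ft [i1 i2 i3] cr].
- split; first by apply/subsetP=> x; rewrite inE.
  + by move=> r h; rewrite inE.
  + by move=> r h; rewrite inE.
- have subp : prop t \subset prop (rcons t (Propose r h)).
    by apply/subsetP=> x; rewrite prop_rcons => ->.
  have rejE : forall x, (x \in rej (rcons t (Propose r h))) = (x \in rej t).
    by move=> x; rewrite rej_rcons orbF.
  split.
  + apply/subsetP=> x; rewrite rejE => xr; apply: (subsetP subp); exact: (subsetP i1).
  + move=> r' h'; rewrite prop_rcons => /orP [/i2 [a b]|/eqP [<- <-]].
      split=> //; apply: sub_all b => y; by rewrite rejE.
    case/and4P: cp => _ _ hl al; split=> //; apply: sub_all al => y; by rewrite rejE.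
  + move=> r' h'; rewrite rejE => /i3; exact: ousted_mono.
- have rejE : forall x, (x \in prop (rcons t (Reject r h))) = (x \in prop t).
    by move=> x; rewrite prop_rcons orbF.
  have subr : rej t \subset rej (rcons t (Reject r h)).
    by apply/subsetP=> x; rewrite rej_rcons => ->.
  have pE : prop (rcons t (Reject r h)) = prop t by apply/setP=> x; rewrite rejE.
  rewrite pE.
  split.
  + apply/subsetP=> x; rewrite rej_rcons => /orP [/(subsetP i1)//|/eqP <-].
    by case/andP: cr => /and3P [].
  + move=> r' h' /i2 [a b]; split=> //; apply: sub_all b => y; exact: (subsetP subr).
  + move=> r' h'; rewrite rej_rcons => /orP [/i3 //|/eqP [<- <-]].
    by case/andP: cr.
Qed.

Lemma max_noprop (R H : finType) (K : instance R H) s r h :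
  maximal_feasible K s -> ~~ can_propose K s r h.
Proof. by case=> f m; apply/negP=> c; apply: (m (Propose r h)); apply: feas_prop. Qed.

Lemma max_norej (R H : finType) (K : instance R H) s r h :
  maximal_feasible K s -> ~~ can_reject K s r h.
Proof. by case=> f m; apply/negP=> c; apply: (m (Reject r h)); apply: feas_rej. Qed.

Lemma count_take_mono (T : eqType) (p : pred T) (L : seq T) i j :
  i <= j -> count p (take i L) <= count p (take j L).
Proof.
move=> le; rewrite -(subnKC le) takeD count_cat; exact: leq_addr.
Qed.

Lemma count_take_le (T : eqType) (p : pred T) (L : seq T) i :
  count p (take i L) <= count p L.
Proof.
rewrite -{2}(cat_take_drop i L) count_cat; exact: leq_addr.
Qed.

Lemma count_take_strict (T : eqType) (p : pred T) (L : seq T) x j :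
  x \in L -> p x -> index x L < j ->
  count p (take (index x L) L) < count p (take j L).
Proof.
move=> xL px lt.
rewrite -(subnKC (ltnW lt)) takeD count_cat -addn1 leq_add2l.
have hs : index x L < size L by rewrite index_mem.
rewrite (drop_nth x hs) nth_index //.
case E: (j - index x L) => [|n]; first by move: lt; rewrite -subn_gt0 E.
by rewrite /= px.
Qed.

Lemma count_take_inj (T : eqType) (p : pred T) (L : seq T) x y :
  x \in L -> y \in L -> p x -> p y ->
  count p (take (index x L) L) = count p (take (index y L) L) -> x = y.
Proof.
move=> xL yL px py e.
case: (ltngtP (index x L) (index y L)) => c;
  first [ exact: (index_inj x) c
        | by have := count_take_strict xL px c; rewrite e ltnn
        | by have := count_take_strict yL py c; rewrite e ltnn ].
Qed.

Lemma count_take_exists (T : eqType) (p : pred T) (L : seq T) k :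
  uniq L -> k < count p L ->
  exists x, [/\ x \in L, p x & count p (take (index x L) L) = k].
Proof.
elim: L k => [|a L IH] k //= /andP [aL uL].
case pa: (p a) => /=.
- case: k => [_|k].
    by exists a; rewrite inE eqxx pa.
  rewrite add1n ltnS => /(IH _ uL) [x [xL px e]].
  exists x; split; first by rewrite inE xL orbT.
    done.
  have xa : (a == x) = false by apply/negbTE; apply: contraNneq aL => ->.
  by rewrite xa /= pa e.
- rewrite add0n => /(IH _ uL) [x [xL px e]].
  exists x; split; first by rewrite inE xL orbT.
    done.
  have xa : (a == x) = false by apply/negbTE; apply: contraFneq pa => ->.
  by rewrite xa /= pa e.
Qed.

Lemma take_index_cat (T : eqType) (s1 s2 : seq T) x : x \in s1 ->
  take (index x (s1 ++ s2)) (s1 ++ s2) = take (index x s1) s1.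
Proof.
move=> xs; rewrite index_cat xs take_cat.
by have := index_mem x s1; rewrite xs => ->.
Qed.

Lemma prefR_take (R H : finType) (I J : instance R H) r h :
  extension I J -> h \in prefR I r ->
  h \in prefR J r /\
  take (index h (prefR J r)) (prefR J r) = take (index h (prefR I r)) (prefR I r).
Proof.
case=> _ [/(_ r) /prefixP [s' ->] _] hI; split; first by rewrite mem_cat hI.
exact: take_index_cat.
Qed.

Lemma mono (R H : finType) (I J : instance R H) sJ t :
  extension I J -> (forall M r h, ousted J M r h = ousted I M r h) ->
  maximal_feasible J sJ -> feasible I t ->
  prop t \subset prop sJ /\ rej t \subset rej sJ.
Proof.
move=> ext oE mJ ft.
have [j1 j2 j3] := feas_inv mJ.1.
elim: ft => [|t0 r h ft [IHp IHr] cp|t0 r h ft [IHp IHr] cr].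
- by split; apply/subsetP=> x; rewrite inE.
- split; last by apply/subsetP=> x; rewrite rej_rcons orbF => /(subsetP IHr).
  apply/subsetP=> x; rewrite prop_rcons => /orP [/(subsetP IHp)//|/eqP <-].
  case/and4P: cp => _ _ hI alI.
  have [hJ tE] := prefR_take ext hI.
  apply/negPn/negP=> nP.
  have := max_noprop r h mJ; rewrite /can_propose nP hJ tE.
  have -> : all (fun h' => (r, h') \in rej sJ) (take (index h (prefR I r)) (prefR I r)).
    by apply: sub_all alI => y /(subsetP IHr).
  rewrite !andbT negbK /res inE => /existsP [h'].
  rewrite /tent inE => /andP [nrj pj].
  have [h'J al'] := j2 _ _ pj.
  set LJ := prefR J r in hJ h'J al' tE.
  have hJ' : h \in LJ by [].
  case: (ltngtP (index h' LJ) (index h LJ)) => c; first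
  [ (move: alI; rewrite -tE => /allP /(_ h'); rewrite in_take // c => /(_ isT) /(subsetP IHr);
     by rewrite (negbTE nrj))
  | (move: al' => /allP /(_ h); rewrite in_take // c => /(_ isT) /(subsetP j1);
     by rewrite (negbTE nP))
  | (have e : h' = h := index_inj h h'J hJ c;
     by move: pj; rewrite e (negbTE nP)) ].
- have pE : prop (rcons t0 (Reject r h)) = prop t0 by apply/setP=> z; rewrite prop_rcons orbF.
  rewrite pE; split=> //.
  apply/subsetP=> y; rewrite rej_rcons => /orP [/(subsetP IHr)//|/eqP <-].
  apply/negPn/negP=> nr.
  have := max_norej r h mJ; rewrite /can_reject nr andbT oE.
  by case/andP: cr => /(ousted_mono IHp) ->.
Qed.

Definition setE := (in_setD, in_setI, in_set0, in_setU).
Lemma res_hE (R H : finType) h (M : {set R * H}) r : (r \in res_h h M) = ((r, h) \in M).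
Proof. by rewrite inE. Qed.
Lemma resE (R H : finType) (M : {set R * H}) r : (r \in res M) = [exists h, (r, h) \in M].
Proof. by rewrite inE. Qed.
Lemma tentE (R H : finType) (s : seq (event R H)) x : (x \in tent s) = (x \notin rej s) && (x \in prop s).
Proof. by rewrite /tent in_setD. Qed.

Unset Implicit Arguments.
Theorem proposition6 (R H : finType) (I J : instance R H)
    (sI sJ : seq (event R H)) :
  wf_instance I -> wf_instance J ->
  maximal_feasible I sI -> maximal_feasible J sJ ->
  resident_minimal I sI -> hospital_complete I ->
  simple_ext I J sI sJ ->
  let P := prop sJ :\: prop sI in
  let X := rej sJ :\: rej sI in
  let Q := P :|: (tent sI :\: X) in
  (P :&: prop sI = set0) /\
      (forall r h1 h2, (r, h1) \in P -> (r, h2) \in P -> h1 = h2) /\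
      (X \subset tent sI) /\
      (res P :&: res (tent sI) \subset res X) /\
      (forall h, #|res_h h Q| <= quota I h /\
                 (res_h h X != set0 -> #|res_h h Q| = quota I h)) /\
      (forall h r r', r \in res_h h Q -> r' \in res_h h X ->
                      precedes (prefH I h) r r').
Proof.
move=> wfI wfJ mI mJ rmin hc [ext simp] P X Q.
rewrite {}/Q {}/P {}/X.
have ext' := ext; case: ext' => [qJ [pR pH]].
have hL : forall h, prefH J h = prefH I h.
  move=> h; case/prefixP: (pH h) => s' e.
  have u := wfJ.2.2 h; rewrite e cat_uniq in u; case/and3P: u => _ /hasPn nh _.
  case: s' e nh => [|y s'] e nh; first by rewrite e cats0.
  by have := nh y; rewrite inE eqxx /= hc => /(_ isT).
have oE : forall M r h, ousted J M r h = ousted I M r h.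
  by move=> M r h; rewrite /ousted /cnt_on hL qJ.
have [i1 i2 i3] := feas_inv mI.1.
have [j1 j2 j3] := feas_inv mJ.1.
have [mp mr] := mono ext oE mJ mI.1.
have XinP : forall x, x \in rej sJ -> x \notin prop sI -> False.
  move=> x xr xn; move/setP: simp => /(_ x); rewrite !setE xn xr (subsetP j1 _ xr) /=.
  by have -> : x \notin rej sI by apply: contra xn => /(subsetP i1).
have Pfacts : forall r h, (r, h) \in prop sJ :\: prop sI ->
   [/\ h \in prefR J r, h \notin prefR I r,
       all (fun h' => (r, h') \in rej sJ) (take (index h (prefR J r)) (prefR J r))
     & (r, h) \notin rej sJ].
  move=> r h; rewrite in_setD => /andP [nI pJ].
  have [a b] := j2 _ _ pJ; split=> //; first by rewrite -rmin.
  by apply/negP=> rr; apply: XinP rr nI.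
split.
  by apply/setP=> x; rewrite !setE; case: (x \in prop sI); rewrite ?andbF ?andbT.
split.
  move=> r h1 h2 /Pfacts [a1 b1 c1 d1] /Pfacts [a2 b2 c2 d2].
  case: (ltngtP (index h1 (prefR J r)) (index h2 (prefR J r))) => c; first
  [ exact: (index_inj h1 a1 a2 c)
  | (move/allP: c2 => /(_ h1); rewrite in_take // c => /(_ isT) rr;
     by case: (XinP _ rr); rewrite rmin)
  | (move/allP: c1 => /(_ h2); rewrite in_take // c => /(_ isT) rr;
     by case: (XinP _ rr); rewrite rmin) ].
split.
  apply/subsetP=> [[r h]]; rewrite !tentE !setE => /andP [nrI rJ]; rewrite nrI /=.
  by apply/negPn/negP => npI; apply: XinP rJ npI.
split.
  apply/subsetP=> r; rewrite in_setI !resE => /andP [/existsP [h hP] /existsP [h'' ht]].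
  have [a b c d] := Pfacts _ _ hP.
  move: ht; rewrite tentE => /andP [nr'' p''].
  have h''I : h'' \in prefR I r by rewrite -rmin.
  case/prefixP: (pR r) => s' eJ.
  apply/existsP; exists h''; rewrite !setE nr'' /=.
  move/allP: c => /(_ h''); apply.
  rewrite eJ in_take; last by rewrite mem_cat h''I.
  rewrite !index_cat h''I (negbTE b); by rewrite ltn_addr // index_mem.
have rejC : forall h r, ((r, h) \in rej sJ) = ((r, h) \in prop sJ) &&
    (quota I h <= count (fun x => x \in res_h h (prop sJ))
                   (take (index r (prefH I h)) (prefH I h))).
  move=> h r; apply/idP/idP.
  - move=> rr; rewrite (subsetP j1 _ rr) /=.
    by have := j3 _ _ rr; rewrite oE /ousted hc /= => /and3P [].
  - case/andP => pr qc; apply/negPn/negP => nr.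
    have := max_norej r h mJ; rewrite /can_reject nr andbT oE /ousted pr hc /= qc andbT.
    by rewrite /cnt_on (leq_trans qc (count_take_le _ _ _)).
have QE : forall h r, (r \in res_h h ((prop sJ :\: prop sI) :|: (tent sI :\: (rej sJ :\: rej sI))))
      = ((r, h) \in tent sJ).
  move=> h r; rewrite res_hE !tentE !setE.
  have := subsetP i1 (r, h); have := subsetP j1 (r, h); have := subsetP mp (r, h);
  have := subsetP mr (r, h); move/setP: simp => /(_ (r, h)); rewrite !setE.
  case: ((r, h) \in prop sI); case: ((r, h) \in rej sI); case: ((r, h) \in prop sJ);
  case: ((r, h) \in rej sJ) => //=; by move=> *; (have : false by auto).
have tC : forall h r, ((r, h) \in tent sJ) = ((r, h) \in prop sJ) &&
    (count (fun x => x \in res_h h (prop sJ))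
                   (take (index r (prefH I h)) (prefH I h)) < quota I h).
  by move=> h r; rewrite tentE rejC; case: ((r, h) \in prop sJ); rewrite /= ?andbT ?andbF -?ltnNge.
split.
  move=> h.
  set S := res_h h _.
  set L := prefH I h.
  set p := (fun x => x \in res_h h (prop sJ)).
  set c := (fun r => count p (take (index r L) L)).
  have uL : uniq L := wfI.2.2 h.
  have U : uniq (map c (enum S)).
    rewrite map_inj_in_uniq ?enum_uniq // => x y; rewrite !mem_enum !QE !tC.
    move=> /andP [px _] /andP [py _].
    apply: count_take_inj (hc h x) (hc h y) _ _; by rewrite /p res_hE.
  have sz : size (map c (enum S)) = #|S| by rewrite size_map cardE.
  have le : #|S| <= quota I h.
    rewrite -sz -(size_iota 0 (quota I h)); apply: uniq_leq_size U _.
    move=> k /mapP [x]; rewrite mem_enum QE tC => /andP [_ xt] ->.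
    by rewrite mem_iota add0n.
  split=> // /set0Pn [r']; rewrite res_hE in_setD => /andP [_].
  rewrite rejC => /andP [_ qr'].
  apply/eqP; rewrite eqn_leq le /= -sz -(size_iota 0 (quota I h)).
  apply: uniq_leq_size (iota_uniq _ _) _.
  move=> k; rewrite mem_iota add0n /= => kq.
  have kc : k < count p (take (index r' L) L) by apply: leq_trans kq qr'.
  have [x [xT px cx]] := count_take_exists (take_uniq (index r' L) uL) kc.
  have e := take_index_cat (drop (index r' L) L) xT; rewrite cat_take_drop in e.
  apply/mapP; exists x; last by rewrite /c e cx.
  rewrite mem_enum QE tC; move: px; rewrite /p res_hE => -> /=.
  by rewrite e cx.
move=> h r r'; rewrite QE tC res_hE in_setD => /andP [_ cr] /andP [_].
rewrite rejC => /andP [_ qr'].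
rewrite /precedes hc /= ltnNge; apply/negP => le.
have := count_take_mono (fun x => x \in res_h h (prop sJ)) (prefH I h) le.
by rewrite leqNgt (leq_trans cr qr').
Qed.
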